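(* Let $\overline{L}$, $D$, $K$, $\alpha(i)$ and $\beta(i)$ be as in the context. There exist $i_1$ and a constant $c_4>0$ such that for all $i\ge i_1$ and all $\mathbf{y}\in\mathbb{R}^{NM}$, $$\mathbf{y}^T\Big(\beta(i)\,\overline{L}\otimes I_M+\alpha(i)(I_N\otimes K)D\Big)\mathbf{y}\ \ge\ c_4\,\alpha(i)\,\|\mathbf{y}\|^2.$$
   Context: Objects: - $\overline{L}$ is the $N\times N$ mean of an i.i.d. sequence of random graph Laplacians on $N$ vertices, with $\lambda_2(\overline{L})>0$. - $\overline{H}_n\in\mathbb{R}^{M_n\times M}$ for $n=1,\dots,N$, with $G=\sum_n\overline{H}_n^T\overline{H}_n$ invertible. - $D=\mathrm{blockdiag}(\overline{H}_1^T\overline{H}_1,\dots,\overline{H}_N^T\overline{H}_N)$. - $K\in\mathbb{R}^{M\times M}$ is symmetric positive definite and commutes with $G$. Weight sequences: $\alpha(i)=a/(i+1)^{\tau_1}$ and $\beta(i)=b/(i+1)^{\tau_2}$, with $a,b>0$, $0<\tau_2\le\tau_1\le1$, and $\tau_1>\max(\tfrac12+\gamma_0,\tau_2+\gamma_0+\tfrac1{2+\varepsilon_1})$ for some $0\le\gamma_0<\tfrac12$ and $\varepsilon_1>0$. In particular $\tau_2<\tau_1$. *)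

(* Defs.v *)
From HB Require Import structures.
From mathcomp Require Import all_boot all_order all_algebra.
From mathcomp Require Import mxtens.
From mathcomp Require Import all_classical all_reals all_analysis.

Set Implicit Arguments.
Unset Strict Implicit.
Unset Printing Implicit Defensive.

Import Order.TTheory GRing.Theory Num.Theory.
Local Open Scope ring_scope.

(* Kronecker product A ⊗ B (standard convention: row index i1 * p + i2),
   from mathcomp-real-closed's mxtens. *)
Notation kron := tensmx.

(* Mean of i.i.d. random graph Laplacians on N vertices: a weighted graph
   Laplacian whose edge weights are the edge probabilities (in [0,1]). *)
Definition mean_graph_laplacian (R : realType) (N : nat) (L : 'M[R]_N) : Prop :=
  L^T = L /\
  (forall i j : 'I_N, i != j -> -1 <= L i j <= 0) /\
  (forall i : 'I_N, \sum_(j < N) L i j = 0).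

(* lambda_2(A) > 0 for a real symmetric matrix A: writing the (real) eigenvalues
   of A, with multiplicity, in increasing order s_0 <= s_1 <= ... <= s_(N-1)
   (i.e. char_poly A = prod ('X - s_k)), the second smallest one s_1 is > 0. *)
Definition lambda2_pos (R : realType) (N : nat) (A : 'M[R]_N) : Prop :=
  exists s : seq R,
    [/\ size s = N, sorted <=%R s,
        char_poly A = \prod_(x <- s) ('X - x%:P) & 0 < nth 0 s 1].

Definition blockdiag_HtH (R : realType) (N M : nat) (Ms : 'I_N -> nat)
    (H : forall n : 'I_N, 'M[R]_(Ms n, M)) : 'M[R]_(N * M) :=
  \sum_(n < N) kron (delta_mx n n) ((H n)^T *m H n).

Definition gram_sum (R : realType) (N M : nat) (Ms : 'I_N -> nat)
    (H : forall n : 'I_N, 'M[R]_(Ms n, M)) : 'M[R]_M :=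
  \sum_(n < N) (H n)^T *m H n.

Definition spd (R : realType) (M : nat) (K : 'M[R]_M) : Prop :=
  K^T = K /\ forall v : 'cV[R]_M, v != 0 -> 0 < (v^T *m K *m v) 0 0.

Definition sqnorm (R : realType) (k : nat) (y : 'cV[R]_k) : R :=
  \sum_(j < k) y j 0 ^+ 2.

Definition wseq (R : realType) (a tau : R) (i : nat) : R :=
  a / ((i.+1)%:R `^ tau).

(* Main.v *)
Require Import Defs.
From HB Require Import structures.
From mathcomp Require Import all_boot all_order all_algebra.
From mathcomp Require Import mxtens.
From mathcomp Require Import all_classical all_reals all_analysis.
From mathcomp Require Import ring lra.
Import Order.TTheory GRing.Theory Num.Theory numFieldNormedType.Exports.
Set Implicit Arguments.
Unset Strict Implicit.
Unset Printing Implicit Defensive.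
Local Open Scope ring_scope.

Section Ray.
Variable R : realType.
Definition bil n (S : 'M[R]_n) (v w : 'rV[R]_n) : R := (v *m S *m w^T) 0 0.
Lemma bilDl n (S : 'M[R]_n) a b c : bil S (a + b) c = bil S a c + bil S b c.
Proof. by rewrite /bil !mulmxDl mxE. Qed.
Lemma bilDr n (S : 'M[R]_n) a b c : bil S a (b + c) = bil S a b + bil S a c.
Proof. by rewrite /bil linearD /= mulmxDr mxE. Qed.
Lemma bilZl n (S : 'M[R]_n) k a c : bil S (k *: a) c = k * bil S a c.
Proof. by rewrite /bil -!scalemxAl mxE. Qed.
Lemma bilZr n (S : 'M[R]_n) k a c : bil S a (k *: c) = k * bil S a c.
Proof. by rewrite /bil linearZ /= -scalemxAr mxE. Qed.
Lemma bilC n (S : 'M[R]_n) a c : S^T = S -> bil S a c = bil S c a.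
Proof.
move=> sS; rewrite /bil; transitivity (((a *m S *m c^T)^T) 0 0); first by rewrite [RHS]mxE.
by rewrite !trmx_mul trmxK sS mulmxA.
Qed.
Lemma quad0 (a b : R) : (forall t, 0 <= t * a + t ^+ 2 * b) -> a = 0.
Proof.
move=> H; set e := (`|b| + 1)^-1.
have e0 : 0 < e by rewrite invr_gt0 ltr_wpDl.
have eb : e * b < 1.
  rewrite /e mulrC ltr_pdivrMr ?ltr_wpDl // mul1r.
  by rewrite (le_lt_trans (ler_norm b)) // ltrDl.
have := H (- a * e).
have : 0 <= a ^+ 2 by rewrite sqr_ge0.
move=> a2 h.
have : a ^+ 2 * e * (e * b - 1) >= 0 by move: h; rewrite expr2; nra.
move=> h2.
have : a ^+ 2 <= 0.
  have: a ^+2 * e <= 0 by nra.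
  by rewrite pmulr_lle0.
by move=> h3; apply/eqP; rewrite -sqrf_eq0 eq_le h3 a2.
Qed.
Lemma bil_cont n (S : 'M[R]_n) : continuous (fun v : 'rV[R]_n => bil S v v).
Proof.
have -> : (fun v : 'rV[R]_n => bil S v v) =
  (fun v => \sum_(j < n) \sum_(k < n) (v 0 k * S k j * v 0 j)).
  apply: funext => v; rewrite /bil !mxE; apply: eq_bigr => j _.
  by rewrite !mxE mulr_suml.
apply: continuous_big => [|j _]; first exact: add_continuous.
apply: continuous_big => [|k _]; first exact: add_continuous.
move=> v.
apply: (@continuousM R _ (fun v : 'rV[R]_n => v 0 k * S k j) (fun v => v 0 j)); last exact: coord_continuous.
apply: (@continuousM R _ (fun v : 'rV[R]_n => v 0 k) (fun v => S k j)); last exact: cst_continuous.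
exact: coord_continuous.
Qed.

Lemma dot_cont' n (c : 'rV[R]_n) : continuous (fun v : 'rV[R]_n => bil 1%:M v c).
Proof.
have -> : (fun v : 'rV[R]_n => bil 1%:M v c) =
  (fun v => \sum_(j < n) (v 0 j * c 0 j)).
  by apply: funext => v; rewrite /bil mulmx1 !mxE; apply: eq_bigr => j _; rewrite mxE.
apply: continuous_big => [|j _]; first exact: add_continuous.
move=> v.
apply: (@continuousM R _ (fun v : 'rV[R]_n => v 0 j) (fun v => c 0 j)); last exact: cst_continuous.
exact: coord_continuous.
Qed.

Definition sqv n (v : 'rV[R]_n) := bil 1%:M v v.

Lemma sqvE n (v : 'rV[R]_n) : sqv v = \sum_j v 0 j ^+ 2.
Proof. by rewrite /sqv /bil mulmx1 mxE; apply: eq_bigr => j _; rewrite mxE expr2. Qed.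

Lemma sqv_ge0 n (v : 'rV[R]_n) : 0 <= sqv v.
Proof. by rewrite sqvE sumr_ge0 // => j _; rewrite sqr_ge0. Qed.

Lemma sqv_coord n (v : 'rV[R]_n) i : v 0 i ^+ 2 <= sqv v.
Proof.
by rewrite sqvE (bigD1 i) //= lerDl sumr_ge0 // => j _; rewrite sqr_ge0.
Qed.

Lemma sqv_eq0 n (v : 'rV[R]_n) : sqv v = 0 -> v = 0.
Proof.
move=> h; apply/rowP => i; rewrite mxE; apply/eqP; rewrite -sqrf_eq0 eq_le sqr_ge0 andbT.
by rewrite -h sqv_coord.
Qed.

Lemma rayleigh n (S : 'M[R]_n) (c : 'rV[R]_n) :
  S^T = S ->
  (exists v0 : 'rV[R]_n, sqv v0 = 1 /\ bil 1%:M v0 c = 0) ->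
  exists (v : 'rV[R]_n) (mu : R), sqv v = 1 /\ bil 1%:M v c = 0 /\
    (forall w, bil 1%:M w c = 0 -> mu * sqv w <= bil S w w) /\
    (forall w, bil 1%:M w c = 0 -> bil S v w = mu * bil 1%:M v w).
Proof.
move=> sS [v0 [v01 v0c]].
pose A := [set v : 'rV[R]_n | sqv v = 1 /\ bil 1%:M v c = 0]%classic.
have cA : compact A.
  apply: (@subclosed_compact _ _
     [set v : 'rV[R]_n | forall i, `[(-1 : R), 1]%classic (v ord0 i)]%classic).
  - have -> : A = ((fun v => sqv v) @^-1` [set x | x = 1] `&`
                     (fun v => bil 1%:M v c) @^-1` [set x | x = 0])%classic by [].
    apply: closedI; apply: (proj1 (continuous_closedP _)) => //.
      exact: bil_cont.
    exact: dot_cont'.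
  - by apply: (@rV_compact _ _ (fun=> `[(-1:R), 1]%classic)) => i; exact: segment_compact.
  - move=> v [v1 _] i /=; rewrite in_itv /=.
    have h := sqv_coord v i; rewrite v1 in h.
    apply/andP; split; nra.
have A0 : (A !=set0)%classic by exists v0.
have [v vA vmin] := compact_EVT_min A0 cA (continuous_subspaceT (@bil_cont n S)).
move: vA; rewrite inE => -[v1 vc].
set mu := bil S v v.
have Hmin : forall w, bil 1%:M w c = 0 -> mu * sqv w <= bil S w w.
  move=> w wc.
  have [w0|wn0] := eqVneq (sqv w) 0.
    by move: w0 => /sqv_eq0 ->; rewrite /sqv /bil !mul0mx !mxE mulr0.
  have sp : 0 < sqv w by rewrite lt_def wn0 sqv_ge0.
  set r := Num.sqrt (sqv w).
  have r0 : 0 < r by rewrite sqrtr_gt0.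
  have rr : r ^+ 2 = sqv w by rewrite sqr_sqrtr // ltW.
  have wA : (r^-1 *: w) \in A.
    rewrite inE; split.
      by rewrite /sqv bilZl bilZr mulrA -expr2 exprVn rr mulVf.
    by rewrite bilZl wc mulr0.
  have := vmin _ wA; rewrite /= bilZl bilZr mulrA -expr2 exprVn rr.
  by rewrite -/mu ler_pdivlMl // mulrC.
exists v, mu; split => //; split => //; split => // w wc.
have q : 2 * (bil S v w - mu * bil 1%:M v w) = 0.
  apply: (@quad0 _ (bil S w w - mu * sqv w)) => t.
  have h := Hmin (v + t *: w).
  have : bil 1%:M (v + t *: w) c = 0 by rewrite bilDl bilZl vc wc mulr0 addr0.
  move/h; rewrite /sqv !(bilDl, bilDr, bilZl, bilZr) -/(sqv v) v1.
  rewrite [bil S w v]bilC // [bil 1%:M w v]bilC ?trmx1 // -/mu.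
  move=> hh; rewrite -subr_ge0 in hh.
  by move: hh; rewrite /sqv; nra.
by apply/eqP; rewrite -subr_eq0; move/eqP: q; rewrite mulf_eq0 pnatr_eq0.
Qed.

End Ray.

Section Ker.
Variable R : realType.

Lemma noX2 (s : seq R) : sorted <=%R s -> 0 < nth 0 s 1 ->
  ~~ ('X ^+ 2 %| \prod_(x <- s) ('X - x%:P)).
Proof.
case: s => [|s0 [|s1 s']] //=; rewrite ?ltxx // => srt s1p.
rewrite big_cons; set P := \prod_(_ <- _) _.
have nr : ~~ root P 0.
  rewrite /P root_prod_XsubC; apply/negP => /[dup] h.
  rewrite inE => /orP[/eqP h0|]; first by move: s1p; rewrite -h0 ltxx.
  move/andP: srt => [_ srt'].
  have /allP := order_path_min le_trans srt'.
  by move=> /[apply]; rewrite leNgt s1p.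
have cp : coprimep ('X ^+ 2) P.
  apply: coprimep_expl; rewrite coprimep_sym -[X in coprimep _ X]subr0.
  by rewrite -polyC0 coprimep_XsubC.
rewrite Gauss_dvdpl //; apply/negP => /dvdp_leq.
have sz : size ('X - s0%:P) = 2 by rewrite size_XsubC.
rewrite -size_poly_eq0 sz size_polyXn => /(_ isT).
by [].
Qed.

Lemma ker2 n (L : 'M[R]_n) (w : 'cV[R]_n) (j j' : 'I_n) :
  (forall i, \sum_k L i k = 0) -> L *m w = 0 -> w j 0 != w j' 0 ->
  'X ^+ 2 %| char_poly L.
Proof.
move=> rs Lw wjj.
have jj : j != j' by apply: contraNneq wjj => ->.
have jj' : j' != j by rewrite eq_sym.
set del := w j' 0 - w j 0.
have del0 : del != 0 by rewrite subr_eq0 eq_sym.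
set d : 'cV[R]_n := del^-1 *: (w - w j 0 *: const_mx 1).
set c : 'cV[R]_n := const_mx 1 - d.
have L1 : L *m (const_mx 1 : 'cV[R]_n) = 0.
  apply/colP => i; rewrite !mxE -[RHS](rs i); apply: eq_bigr => k _.
  by rewrite mxE mulr1.
have Ld : L *m d = 0 by rewrite /d -scalemxAr mulmxBr Lw -scalemxAr L1 scaler0 subr0 scaler0.
have Lc : L *m c = 0 by rewrite /c mulmxBr L1 Ld subr0.
have dj : d j 0 = 0 by rewrite !mxE mulr1 subrr mulr0.
have dj' : d j' 0 = 1 by rewrite !mxE mulr1 -/del mulVf.
have cj : c j 0 = 1 by rewrite !mxE mulr1 subrr mulr0 subr0.
have cj' : c j' 0 = 0 by rewrite !mxE mulr1 -/del mulVf // subrr.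
clearbody c d.
pose E := \matrix_(a, b) (if b == j then c a 0 else if b == j' then d a 0
                          else (a == b)%:R : R).
pose N0 := E - 1%:M.
have Nk : forall k b, (k == j) || (k == j') -> N0 k b = 0.
  move=> k b /orP[] /eqP ->; rewrite !mxE.
    case: eqP => [->|bj]; first by rewrite cj eqxx subrr.
    case: eqP => [->|bj']; first by rewrite dj (negbTE jj) subrr.
    by rewrite subrr.
  case: eqP => [->|bj]; first by rewrite cj' eq_sym (negbTE jj) subrr.
  case: eqP => [->|bj']; first by rewrite dj' eqxx subrr.
  by rewrite subrr.
have Na : forall a k, ~~ ((k == j) || (k == j')) -> N0 a k = 0.
  move=> a k; rewrite negb_or => /andP[/negbTE kj /negbTE kj'].
  by rewrite !mxE kj kj' subrr.
have N00 : N0 *m N0 = 0.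
  apply/matrixP => a b; rewrite !mxE big1 // => k _.
  case h : ((k == j) || (k == j')); first by rewrite (Nk k b) ?h // mulr0.
  by rewrite (Na a k) ?h // mul0r.
have EU : E \in unitmx.
  have : E *m (1%:M - N0) = 1%:M.
    rewrite (_ : E = N0 + 1%:M); last by rewrite /N0 subrK.
    by rewrite mulmxDl mulmxBr N00 mul1mx mulmx1 subr0 addrC subrK.
  by case/mulmx1_unit.
pose Dv : 'rV[{poly R}]_n := \row_b (if (b == j) || (b == j') then 'X else 1).
pose G : 'M[{poly R}]_n := \matrix_(a, b) (if b == j then (c a 0)%:P
   else if b == j' then (d a 0)%:P else char_poly_mx L a b).
have colE : forall (u : 'cV[R]_n) a,
    \sum_k char_poly_mx L a k * (u k 0)%:P = 'X * (u a 0)%:P - ((L *m u) a 0)%:P.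
  move=> u a.
  under eq_bigr do rewrite !mxE mulrBl.
  rewrite sumrB (bigD1 a) //= eqxx mulr1n big1 ?addr0; last first.
    by move=> k /negbTE; rewrite eq_sym => ->; rewrite mulr0n mul0r.
  rewrite mxE rmorph_sum; congr (_ - _); apply: eq_bigr => k _.
  by rewrite rmorphM.
have PI : char_poly_mx L *m map_mx polyC E = G *m diag_mx Dv.
  apply/matrixP => a b; rewrite mul_mx_diag !mxE.
  case: (eqVneq b j) => [->|bj].
    rewrite (eq_bigr (fun k => char_poly_mx L a k * (c k 0)%:P)); last first.
      by move=> k _; congr (_ * _); rewrite !mxE eqxx.
    by rewrite (colE c) Lc mxE polyC0 subr0 mulrC.
  case: (eqVneq b j') => [->|bj'].
    rewrite (eq_bigr (fun k => char_poly_mx L a k * (d k 0)%:P)); last first.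
      by move=> k _; congr (_ * _); rewrite !mxE (negbTE jj') eqxx.
    by rewrite (colE d) Ld mxE polyC0 subr0 mulrC orbT.
  rewrite /=.
  rewrite (eq_bigr (fun k => char_poly_mx L a k * ((\col_k ((k == b)%:R : R)) k 0)%:P)); last first.
    by move=> k _; congr (_ * _); rewrite !mxE (negbTE bj) (negbTE bj').
  rewrite colE !mxE mulr1 (bigD1 b) //= big1 ?addr0; last first.
    by move=> k /negbTE kb; rewrite !mxE kb mulr0.
  rewrite !mxE eqxx mulr1.
  by case: (a == b); rewrite ?mulr1 ?mulr0 ?mulr1n ?mulr0n.
have detE : char_poly L * (\det E)%:P = \det G * 'X ^+ 2.
  have := congr1 determinant PI; rewrite !det_mulmx det_diag det_map_mx.
  move=> ->; congr (_ * _).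
  rewrite (bigD1 j) //= (bigD1 j') //= big1 => [|i /andP[ij' ij]].
    by rewrite !mxE !eqxx orbT mulr1 expr2.
  by rewrite mxE (negbTE ij) (negbTE ij').
have dE : \det E != 0 by rewrite -unitfE -unitmxE.
have -> : char_poly L = char_poly L * (\det E)%:P * ((\det E)^-1)%:P.
  by rewrite -mulrA -polyCM mulfV // mulr1.
by rewrite detE mulrAC; apply: dvdp_mull; exact: dvdpp.
Qed.
End Ker.

Section Lap.
Variable R : realType.

Lemma bil_delta_r n (S : 'M[R]_n) v i : bil S v (delta_mx 0 i) = (v *m S) 0 i.
Proof. by rewrite /bil trmx_delta -colE mxE. Qed.

Lemma bil1_dd n (i k : 'I_n) : bil 1%:M (delta_mx 0 i) (delta_mx 0 k) = (i == k)%:R :> R.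
Proof. by rewrite bil_delta_r mulmx1 mxE eqxx eq_sym. Qed.

Lemma bil1_const n (v : 'rV[R]_n) : bil 1%:M v (const_mx 1) = \sum_i v 0 i.
Proof.
rewrite /bil mulmx1 mxE; apply: eq_bigr => i _; by rewrite !mxE mulr1.
Qed.

Lemma tail_ge (s0 s1 : R) s x : sorted <=%R [:: s0, s1 & s] -> x \in s1 :: s -> s1 <= x.
Proof.
move=> /= /andP[_ srt]; rewrite inE => /orP[/eqP ->//|xs].
by have /allP := order_path_min le_trans srt; apply.
Qed.

Lemma lap_coerc n (L : 'M[R]_n) : mean_graph_laplacian L -> lambda2_pos L ->
  exists lam, 0 < lam /\ forall x : 'rV[R]_n,
    bil 1%:M x (const_mx 1) = 0 -> lam * sqv x <= bil L x x.
Proof.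
move=> [sL [_ rs]] [s [sz srt cp s1p]].
have [n1|n2] := leqP n 1.
  by move: s1p; rewrite nth_default ?ltxx // sz.
have n0 : (0 < n)%N by apply: ltn_trans n2.
pose i0 := Ordinal n0; pose i1 := Ordinal n2.
have i01 : i0 != i1 by [].
have [v [mu [v1 [vc [Hmin Hlag]]]]] : exists (v : 'rV[R]_n) (mu : R), sqv v = 1 /\
    bil 1%:M v (const_mx 1) = 0 /\
    (forall w, bil 1%:M w (const_mx 1) = 0 -> mu * sqv w <= bil L w w) /\
    (forall w, bil 1%:M w (const_mx 1) = 0 -> bil L v w = mu * bil 1%:M v w).
  apply: rayleigh => //.
  exists ((Num.sqrt 2)^-1 *: (delta_mx 0 i0 + (-1) *: delta_mx 0 i1)); split.
    rewrite /sqv !(bilZl, bilZr, bilDl, bilDr) !bil1_dd eqxx (negbTE i01) eq_sym (negbTE i01).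
    have s2 : Num.sqrt (2:R) ^+ 2 = 2 by rewrite sqr_sqrtr.
    have s20 : Num.sqrt (2:R) != 0 by rewrite sqrtr_eq0 -ltNge.
    by rewrite !mulrA -expr2 exprVn s2 eqxx /=; field.
  rewrite bilZl bilDl bilZl !bil1_const.
  have sd : forall k : 'I_n, \sum_i (delta_mx 0 k : 'rV[R]_n) 0 i = 1.
    move=> k; rewrite (bigD1 k) //= big1 ?addr0; first by rewrite mxE !eqxx.
    by move=> i ik; rewrite mxE (negbTE ik) andbF.
  by rewrite !sd mulr1 subrr mulr0.
have vL : v *m L = mu *: v.
  pose u i := (v *m L) 0 i - mu * v 0 i.
  have ue : forall i k, u i = u k.
    move=> i k.
    have := Hlag (delta_mx 0 i + (-1) *: delta_mx 0 k).
    rewrite bilDl bilZl !bil1_const.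
    have sd : forall k : 'I_n, \sum_i (delta_mx 0 k : 'rV[R]_n) 0 i = 1.
      move=> k'; rewrite (bigD1 k') //= big1 ?addr0; first by rewrite mxE !eqxx.
      by move=> i' ik; rewrite mxE (negbTE ik) andbF.
    rewrite !sd mulr1 subrr => /(_ erefl).
    rewrite !bilDr !bilZr !bil_delta_r mulmx1 /u.
    set A := (v *m L) 0 i; set B := (v *m L) 0 k; set C := v 0 i; set D := v 0 k.
    move=> h; apply/eqP; rewrite -subr_eq0; apply/eqP.
    transitivity (A + -1 * B - mu * (C + -1 * D)); first by ring.
    by rewrite h subrr.
  have su : \sum_i u i = 0.
    rewrite /u sumrB -mulr_sumr.
    have -> : \sum_i v 0 i = 0 by rewrite -bil1_const.
    rewrite mulr0 subr0.
    under eq_bigr do rewrite mxE.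
    rewrite exchange_big /=.
    by apply: big1 => k _; rewrite -mulr_sumr rs mulr0.
  have u0 : forall i, u i = 0.
    move=> i.
    have : \sum_(k < n) u k = n%:R * u i.
      rewrite (eq_bigr (fun=> u i)); last by move=> k _; rewrite (ue k i).
      by rewrite sumr_const card_ord mulr_natl.
    rewrite su => /esym /eqP; rewrite mulf_eq0 pnatr_eq0 (negbTE (lt0n_neq0 n0)) /= => /eqP.
    by [].
  apply/rowP => i; rewrite [RHS]mxE; apply/eqP; rewrite -subr_eq0; apply/eqP.
  exact: u0 i.
have vn0 : v != 0.
  apply/eqP => v0; move: v1; rewrite v0 /sqv /bil !mul0mx mxE => /eqP.
  by rewrite eq_sym oner_eq0.
have eigmu : mu \in s.
  have : eigenvalue L mu by apply/eigenvalueP; exists v.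
  by rewrite eigenvalue_root_char cp root_prod_XsubC.
have eig0 : 0 \in s.
  have : eigenvalue L 0.
    apply/eigenvalueP; exists (const_mx 1).
      apply/rowP => j; rewrite scale0r !mxE -[RHS](rs j); apply: eq_bigr => i _.
      by rewrite mxE mul1r -[in LHS]sL mxE.
    by apply/negP => /eqP/rowP/(_ i0); rewrite !mxE => /eqP; rewrite oner_eq0.
  by rewrite eigenvalue_root_char cp root_prod_XsubC.
have mu0 : mu != 0.
  apply/eqP => mu0.
  have Lv : L *m v^T = 0 by rewrite -[L]sL -trmx_mul vL mu0 scale0r trmx0.
  have [j [j' hjj]] : exists j j', v 0 j != v 0 j'.
    case: (boolP [exists j, v 0 j != v 0 i0]) => [/existsP [j hj]|]; first by exists j, i0.
    rewrite negb_exists => /forallP hall.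
    have ev : forall j, v 0 j = v 0 i0 by move=> j; apply/eqP; rewrite -[_ == _]negbK hall.
    have : \sum_i v 0 i = n%:R * v 0 i0.
      by rewrite (eq_bigr (fun=> v 0 i0)) ?sumr_const ?card_ord ?mulr_natl // => k _.
    rewrite -bil1_const vc => /esym /eqP; rewrite mulf_eq0 pnatr_eq0 (negbTE (lt0n_neq0 n0)) /= => /eqP vi0.
    by exfalso; move/negP: vn0; apply; apply/eqP/rowP => k; rewrite ev vi0 mxE.
  have := @ker2 R n L v^T j j' rs Lv; rewrite !mxE => /(_ hjj); rewrite cp.
  by apply/negP; apply: noX2.
move: sz srt cp s1p eigmu eig0; case: s => [|s0 [|s1 s'']] /=; try by rewrite ltxx.
move=> _ srt _ s1p eigmu eig0.
have s00 : s0 = 0.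
  move: eig0; rewrite inE => /orP[/eqP -> //|/(tail_ge srt)].
  by rewrite leNgt s1p.
move: eigmu; rewrite inE => /orP[/eqP mus|/(tail_ge srt) mus].
  by move: mu0; rewrite mus s00 eqxx.
by exists mu; split => //; apply: lt_le_trans mus.
Qed.
End Lap.
Section KG.
Variable R : realType.

Lemma bil_sum n (I : finType) (F : I -> 'M[R]_n) v w :
  bil (\sum_i F i) v w = \sum_i bil (F i) v w.
Proof. by rewrite /bil mulmx_sumr mulmx_suml summxE. Qed.

Lemma bil_gram n m (A : 'M[R]_(m, n)) v : bil (A^T *m A) v v = sqv (v *m A^T).
Proof. by rewrite /sqv /bil mulmx1 trmx_mul trmxK !mulmxA. Qed.

Lemma kg_coerc N M (Ms : 'I_N -> nat) (H : forall n : 'I_N, 'M[R]_(Ms n, M)) (K : 'M[R]_M) :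
  gram_sum H \in unitmx -> spd K -> K *m gram_sum H = gram_sum H *m K ->
  exists c1, 0 < c1 /\ forall v : 'rV[R]_M, c1 * sqv v <= bil (K *m gram_sum H) v v.
Proof.
move=> GU [sK Kpd] comm.
set G := gram_sum H in GU comm *.
have sG : G^T = G.
  rewrite /G /gram_sum linear_sum /=; apply: eq_bigr => n _.
  by rewrite trmx_mul trmxK.
have sS : (K *m G)^T = K *m G by rewrite trmx_mul sG sK comm.
have [M0|Mpos] := posnP M.
  exists 1; split => // v; rewrite sqvE /bil mxE.
  by rewrite !big1 ?mulr0 // => i; have := ltn_ord i; rewrite {2}M0.
pose i0 := Ordinal Mpos.
have ex0 : exists v0 : 'rV[R]_M, sqv v0 = 1 /\ bil 1%:M v0 0 = 0.
  exists (delta_mx 0 i0); split; first by rewrite /sqv bil1_dd eqxx.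
  by rewrite /bil trmx0 mulmx0 mxE.
have [v [mu [v1 [_ [Hmin Hlag]]]]] := @rayleigh R M (K *m G) 0 sS ex0.
have b0 : forall w : 'rV[R]_M, bil 1%:M w 0 = 0 by move=> w; rewrite /bil trmx0 mulmx0 mxE.
have vn0 : v != 0.
  apply/eqP => v0; move: v1; rewrite v0 /sqv /bil !mul0mx mxE => /eqP.
  by rewrite eq_sym oner_eq0.
have h := Hlag (v *m G) (b0 _).
have e1 : bil (K *m G) v (v *m G) = bil K (v *m G) (v *m G).
  by rewrite /bil trmx_mul sG !mulmxA -[v *m K *m G](mulmxA) comm mulmxA.
have e2 : bil 1%:M v (v *m G) = bil G v v.
  by rewrite /bil trmx_mul sG mulmx1 mulmxA.
have pos : 0 < bil K (v *m G) (v *m G).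
  have xn0 : (v *m G)^T != 0.
    apply/eqP => /(congr1 trmx); rewrite trmxK trmx0 => vG0.
    move/negP: vn0; apply; apply/eqP.
    by rewrite -[v]mulmx1 -(mulmxV GU) mulmxA vG0 mul0mx.
  have := Kpd _ xn0; rewrite trmxK.
  by rewrite /bil.
have gnn : 0 <= bil G v v.
  rewrite /G /gram_sum bil_sum; apply: sumr_ge0 => n _.
  by rewrite bil_gram sqv_ge0.
have mup : 0 < mu.
  rewrite ltNge; apply/negP => mu0.
  have : mu * bil G v v <= 0 by rewrite mulr_le0_ge0.
  by rewrite -e2 -h e1 leNgt pos.
by exists mu; split => // w; apply: Hmin; apply: b0.
Qed.
End KG.

Section Rat.
Variable R : realType.
Lemma ratio_grow (a b t1 t2 g : R) : 0 < a -> 0 < b -> t2 < t1 ->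
  exists i1, forall i, (i1 <= i)%N -> g * wseq a t1 i <= wseq b t2 i.
Proof.
move=> a0 b0 t12.
set d := t1 - t2.
have d0 : 0 < d by rewrite subr_gt0.
set z := Num.max 0 (g * a / b).
set B := z `^ d^-1.
exists (Num.bound B) => i hi.
set x : R := i.+1%:R.
have x1 : 1 <= x by rewrite /x ler1n.
have x0 : 0 < x by apply: lt_le_trans x1.
have xB : B <= x.
  apply/ltW; apply: (lt_le_trans (archi_boundP _)); first exact: powR_ge0.
  by rewrite /x ler_nat (leq_trans hi).
have z0 : 0 <= z by rewrite /z le_max lexx.
have zx : z <= x `^ d.
  have -> : z = B `^ d by rewrite /B -powRrM mulVf ?gt_eqF // powRr1.
  apply: ge0_ler_powR => //; first exact: ltW.
    by rewrite nnegrE powR_ge0.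
  by rewrite nnegrE ltW.
have gz : g * a / b <= z by rewrite /z le_max lexx orbT.
have t1e : t1 = t2 + d by rewrite /d addrC subrK.
rewrite /wseq -/x t1e powRD; last by apply/implyP => _; rewrite gt_eqF.
set p := x `^ t2; set q := x `^ d.
have p0 : 0 < p by apply: powR_gt0.
have q0 : 0 < q by apply: powR_gt0.
have e : b / p - g * (a / (p * q)) = (b * q - g * a) / (p * q).
  by field; rewrite gt_eqF // gt_eqF.
rewrite -subr_ge0 e; apply: divr_ge0; last by rewrite mulr_ge0 // ltW.
rewrite subr_ge0.
have : g * a <= b * z.
  by rewrite -ler_pdivrMl // mulrC.
move=> h; apply: (le_trans h); rewrite ler_pM2l //.
Qed.
End Rat.

Section G.
Variable R : realType.

Lemma bilE n (S : 'M[R]_n) u w : bil S u w = \sum_i \sum_j u 0 i * S i j * w 0 j.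
Proof.
rewrite /bil mxE exchange_big /=; apply: eq_bigr => j _.
by rewrite !mxE mulr_suml.
Qed.

Definition Cs n (S : 'M[R]_n) := \sum_i \sum_j `|S i j|.

Lemma Cs_ge0 n (S : 'M[R]_n) : 0 <= Cs S.
Proof. by apply: sumr_ge0 => i _; apply: sumr_ge0 => j _. Qed.

Lemma amgm (e x y : R) : 0 < e -> `|x * y| <= (e * x ^+ 2 + y ^+ 2 / e) / 2.
Proof.
move=> e0; rewrite normrM.
have h : 0 <= (e * `|x| - `|y|) ^+ 2 by rewrite sqr_ge0.
have hx : `|x| ^+ 2 = x ^+ 2 by rewrite real_normK ?num_real.
have hy : `|y| ^+ 2 = y ^+ 2 by rewrite real_normK ?num_real.
rewrite -hx -hy.
have : 0 <= ((e * `|x| - `|y|) ^+ 2) / e / 2 by rewrite !divr_ge0 // ltW.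
move=> h2; rewrite -subr_ge0; apply: le_trans h2 _; rewrite le_eqVlt; apply/orP; left.
by apply/eqP; field; rewrite gt_eqF.
Qed.

Lemma bil_lb n (S : 'M[R]_n) u w (e : R) : 0 < e ->
  - (Cs S * ((e * sqv u + sqv w / e) / 2)) <= bil S u w.
Proof.
move=> e0; rewrite bilE /Cs mulr_suml -sumrN; apply: ler_sum => i _.
rewrite mulr_suml -sumrN; apply: ler_sum => j _.
set B := (e * sqv u + sqv w / e) / 2.
have hb : `|u 0 i * w 0 j| <= B.
  apply: le_trans (amgm _ _ e0) _; rewrite ler_pM2r // lerD //.
    by rewrite ler_pM2l // sqv_coord.
  by rewrite ler_pM2r ?invr_gt0 // sqv_coord.
have : `|u 0 i * S i j * w 0 j| <= `|S i j| * B.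
  rewrite mulrAC normrM mulrC ler_wpM2l //.
rewrite ler_norml => /andP[h _]; move: h; apply: le_trans.
by rewrite lexx.
Qed.

Lemma sum_tens N M (F : 'I_(N * M) -> R) :
  \sum_k F k = \sum_(n < N) \sum_(m < M) F (mxtens_index (n, m)).
Proof.
rewrite pair_big /=.
rewrite (reindex (@mxtens_index N M)) /=; last first.
  by exists (@mxtens_unindex N M) => k _; rewrite (mxtens_indexK, mxtens_unindexK).
by apply: eq_bigr => -[n m].
Qed.

Lemma quadE k (A : 'M[R]_k) (y : 'cV[R]_k) :
  (y^T *m A *m y) 0 0 = bil A y^T y^T.
Proof. by rewrite /bil trmxK. Qed.

End G.

Section H.
Variable R : realType.
Variables N M : nat.
Implicit Types y : 'cV[R]_(N * M).
Definition Yr y (n : 'I_N) : 'rV[R]_M := \row_m y (mxtens_index (n, m)) 0.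
Definition Xc y (m : 'I_M) : 'rV[R]_N := \row_n y (mxtens_index (n, m)) 0.

Lemma Q1 (L : 'M[R]_N) y :
  bil (kron L (1%:M : 'M[R]_M)) y^T y^T = \sum_m bil L (Xc y m) (Xc y m).
Proof.
transitivity (\sum_n \sum_m \sum_n' y (mxtens_index (n, m)) 0 * L n n' * y (mxtens_index (n', m)) 0).
  rewrite bilE sum_tens; apply: eq_bigr => n _; apply: eq_bigr => m _.
  rewrite sum_tens; apply: eq_bigr => n' _.
  rewrite (bigD1 m) //= big1 ?addr0.
    by rewrite tensmxE !mxE eqxx mulr1.
  by move=> m' mm'; rewrite tensmxE !mxE eq_sym (negbTE mm') mulr0 mulr0 mul0r.
rewrite exchange_big; apply: eq_bigr => m _; rewrite bilE; apply: eq_bigr => n _.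
by apply: eq_bigr => n' _; rewrite !mxE.
Qed.

Lemma Q2 (K : 'M[R]_M) (B : 'I_N -> 'M[R]_M) y :
  bil (kron (1%:M : 'M[R]_N) K *m \sum_n kron (delta_mx n n) (B n)) y^T y^T
  = \sum_n bil (K *m B n) (Yr y n) (Yr y n).
Proof.
rewrite mulmx_sumr bil_sum; apply: eq_bigr => n0 _.
rewrite tensmx_mul mul1mx.
rewrite bilE sum_tens [LHS](bigD1 n0) //= [X in _ + X]big1 ?addr0; last first.
  move=> n nn0; apply: big1 => m _; apply: big1 => k _.
  case: (mxtens_indexP k) => n' m'.
  by rewrite tensmxE !mxE (negbTE nn0) /= !(mul0r, mulr0).
rewrite bilE; apply: eq_bigr => m _.
rewrite sum_tens [LHS](bigD1 n0) //= [X in _ + X]big1 ?addr0; last first.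
  move=> n nn0; apply: big1 => m' _.
  by rewrite tensmxE !mxE (negbTE nn0) andbF mul0r mulr0 mul0r.
apply: eq_bigr => m' _.
by rewrite tensmxE !mxE !eqxx mul1r.
Qed.

Lemma Q3 y : sqnorm y = \sum_n sqv (Yr y n).
Proof.
rewrite /sqnorm sum_tens; apply: eq_bigr => n _.
by rewrite sqvE; apply: eq_bigr => m _; rewrite mxE.
Qed.
End H.

Section I.
Variable R : realType.

Lemma Lshift n (L : 'M[R]_n) (x : 'rV[R]_n) (c : R) :
  L^T = L -> (forall i, \sum_(j < n) L i j = 0) ->
  bil L (x - c *: const_mx 1) (x - c *: const_mx 1) = bil L x x.
Proof.
move=> sL rs.
have L1 : L *m (const_mx 1 : 'cV[R]_n) = 0.
  apply/colP => i; rewrite !mxE -[RHS](rs i); apply: eq_bigr => k _.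
  by rewrite mxE mulr1.
have b1 : forall u, bil L u (const_mx 1) = 0.
  by move=> u; rewrite /bil trmx_const -mulmxA L1 mulmx0 mxE.
rewrite -scaleNr !(bilDl, bilDr, bilZl, bilZr) !b1 [bil L (const_mx 1) x]bilC // b1.
by rewrite !mulr0 !addr0.
Qed.

Lemma sqv_split n (u w : 'rV[R]_n) : sqv (u + w) <= 2 * sqv u + 2 * sqv w.
Proof.
rewrite !sqvE !mulr_sumr -big_split /=; apply: ler_sum => i _.
rewrite mxE.
have := sqr_ge0 (u 0 i - w 0 i); nra.
Qed.
End I.

Lemma bilSD (R : realType) n (S T : 'M[R]_n) u w : bil (S + T) u w = bil S u w + bil T u w.
Proof. by rewrite /bil mulmxDr mulmxDl mxE. Qed.
Lemma bilSZ (R : realType) n (S : 'M[R]_n) k u w : bil (k *: S) u w = k * bil S u w.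
Proof. by rewrite /bil -scalemxAr -scalemxAl mxE. Qed.

Theorem lemma3 (R : realType) (N M : nat) (Lbar : 'M[R]_N)
    (Ms : 'I_N -> nat) (H : forall n : 'I_N, 'M[R]_(Ms n, M))
    (K : 'M[R]_M) (a b tau1 tau2 gamma0 eps1 : R) :
  mean_graph_laplacian Lbar ->
  lambda2_pos Lbar ->
  gram_sum H \in unitmx ->
  spd K ->
  K *m gram_sum H = gram_sum H *m K ->
  0 < a -> 0 < b ->
  0 < tau2 -> tau2 <= tau1 -> tau1 <= 1 ->
  0 <= gamma0 -> gamma0 < 1 / 2 -> 0 < eps1 ->
  1 / 2 + gamma0 < tau1 ->
  tau2 + gamma0 + 1 / (2 + eps1) < tau1 ->
  exists (i1 : nat) (c4 : R), 0 < c4 /\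
    forall i : nat, (i1 <= i)%N -> forall y : 'cV[R]_(N * M),
      c4 * wseq a tau1 i * sqnorm y <=
      (y^T *m (wseq b tau2 i *: kron Lbar (1%:M : 'M[R]_M)
               + wseq a tau1 i *: (kron (1%:M : 'M[R]_N) K *m blockdiag_HtH H))
           *m y) 0 0.
Proof.
move=> mgl l2 GU sK comm a0 b0 t20 t21 t11 g0 g1 e0 h1 h2.
have t12 : tau2 < tau1.
  have : 0 < 1 / (2 + eps1) by rewrite divr_gt0 // addr_gt0.
  by move=> h; lra.
have [lam [lam0 Hlam]] := lap_coerc mgl l2.
have [c1 [c10 Hc1]] := kg_coerc GU sK comm.
move: (mgl) => [sL [_ rs]].
have [N0|Npos] := posnP N.
  exists 0%N, 1; split => // i _ y.
  rewrite quadE bilE /sqnorm !big1 ?mulr0 // => k; have := ltn_ord k; by rewrite {2}N0.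
have Nr0 : (N%:R : R) != 0 by rewrite pnatr_eq0 -lt0n Npos.
have Nr0' : (0 : R) < N%:R by rewrite ltr0n.
pose A n := K *m ((H n)^T *m H n).
pose Ct := \sum_n Cs (A n).
have Ct0 : 0 <= Ct by apply: sumr_ge0 => n _; exact: Cs_ge0.
pose eps := c1 / (2 * (Ct + 1)).
have Ct1 : 0 < Ct + 1 by rewrite ltr_wpDl.
have eps0 : 0 < eps by rewrite divr_gt0 // mulr_gt0.
have epsCt : Ct * eps <= c1 / 2.
  have h : Ct / (Ct + 1) <= 1 by rewrite ler_pdivrMr // mul1r lerDl.
  have -> : Ct * eps = c1 / 2 * (Ct / (Ct + 1)).
    by rewrite /eps; field; rewrite gt_eqF.
  by rewrite ler_piMr // divr_ge0 // ltW.
pose C' := Ct * (eps^-1 + 1).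
pose c4 := c1 / (4 * N%:R).
pose Gm := (C' + c1 / (2 * N%:R)) / lam.
have [i1 Hi] := ratio_grow Gm a0 b0 t12.
exists i1, c4; split; first by rewrite divr_gt0 // mulr_gt0.
move=> i hi y.
set al := wseq a tau1 i; set be := wseq b tau2 i.
have al0 : 0 < al by rewrite /al /wseq divr_gt0 // powR_gt0.
have be0 : 0 < be by rewrite /be /wseq divr_gt0 // powR_gt0.
have Hbe : Gm * al <= be := Hi i hi.
rewrite quadE bilSD !bilSZ Q1 /blockdiag_HtH Q2 Q3.
set Y := Yr y.
pose ym : 'rV[R]_M := N%:R^-1 *: \sum_n Y n.
have ymE : forall m, ym 0 m = N%:R^-1 * \sum_n y (mxtens_index (n, m)) 0.
  by move=> m; rewrite !mxE summxE; congr (_ * _); apply: eq_bigr => n _; rewrite mxE.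
clearbody ym.
pose er n := Y n - ym.
have Yer : forall n, Y n = ym + er n by move=> n; rewrite /er addrC subrK.
pose e2 := \sum_n sqv (er n).
pose sy := sqv ym.
have e20 : 0 <= e2 by apply: sumr_ge0 => n _; exact: sqv_ge0.
have sy0 : 0 <= sy by exact: sqv_ge0.
have hT1 : lam * e2 <= \sum_m bil Lbar (Xc y m) (Xc y m).
  have -> : e2 = \sum_m sqv (Xc y m - ym 0 m *: const_mx 1).
    rewrite /e2 (eq_bigr (fun n => \sum_m (y (mxtens_index (n, m)) 0 - ym 0 m) ^+ 2)); last first.
      by move=> n _; rewrite sqvE; apply: eq_bigr => m _; rewrite /er /Y !mxE.
    rewrite exchange_big; apply: eq_bigr => m _; rewrite sqvE; apply: eq_bigr => n _.
    by rewrite !mxE mulr1.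
  rewrite mulr_sumr; apply: ler_sum => m _.
  rewrite -(Lshift _ (ym 0 m) sL rs); apply: Hlam.
  rewrite bil1_const.
  rewrite (eq_bigr (fun n => y (mxtens_index (n, m)) 0 - ym 0 m)); last first.
    by move=> n _; rewrite !mxE mulr1.
  by rewrite sumrB sumr_const card_ord ymE -[X in _ - X]mulr_natr mulrAC mulVf // mul1r subrr.
have hT2 : c1 / 2 * sy - C' * e2 <= \sum_n bil (A n) (Y n) (Y n).
  have dec : forall n, bil (A n) (Y n) (Y n) = bil (A n) ym ym +
      (bil (A n) ym (er n) + bil (A n) (er n) ym + bil (A n) (er n) (er n)).
    by move=> n; rewrite [in LHS]Yer !(bilDl, bilDr) !addrA.
  rewrite (eq_bigr _ (fun n _ => dec n)) big_split /=.
  have kg : bil (K *m gram_sum H) ym ym = \sum_n bil (A n) ym ym.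
    by rewrite /gram_sum mulmx_sumr bil_sum.
  rewrite -kg.
  have ie0 : 0 < eps^-1 by rewrite invr_gt0.
  have lb : forall n, - (Cs (A n) * eps * sy + Cs (A n) * (eps^-1 + 1) * e2) <=
      bil (A n) ym (er n) + bil (A n) (er n) ym + bil (A n) (er n) (er n).
    move=> n.
    have ll1 := bil_lb (A n) ym (er n) eps0.
    have ll2 := bil_lb (A n) (er n) ym ie0.
    have ll3 := bil_lb (A n) (er n) (er n) ltr01.
    have se : sqv (er n) <= e2.
      by rewrite /e2 (bigD1 n) //= lerDl sumr_ge0 // => k _; exact: sqv_ge0.
    have cs0 := Cs_ge0 (A n).
    have ie1 : 0 <= eps^-1 + 1 by rewrite addr_ge0 // ltW.
    have h3 : Cs (A n) * (eps^-1 + 1) * sqv (er n) <= Cs (A n) * (eps^-1 + 1) * e2.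
      by rewrite ler_wpM2l // mulr_ge0.
    have eq : Cs (A n) * ((eps * sy + sqv (er n) / eps) / 2) +
              Cs (A n) * ((eps^-1 * sqv (er n) + sy / eps^-1) / 2) +
              Cs (A n) * ((1 * sqv (er n) + sqv (er n) / 1) / 2) =
              Cs (A n) * eps * sy + Cs (A n) * (eps^-1 + 1) * sqv (er n).
      by rewrite /sy; field; rewrite gt_eqF.
    move: ll1 ll2 ll3 h3 eq.
    set P1 := Cs (A n) * _; set P2 := Cs (A n) * _; set P3 := Cs (A n) * _.
    set X := Cs (A n) * eps * sy; set Z := Cs (A n) * (eps^-1 + 1) * sqv (er n).
    set W := Cs (A n) * (eps^-1 + 1) * e2.
    by move=> *; lra.
  have slb : \sum_n - (Cs (A n) * eps * sy + Cs (A n) * (eps^-1 + 1) * e2) <=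
      \sum_n (bil (A n) ym (er n) + bil (A n) (er n) ym + bil (A n) (er n) (er n)).
    by apply: ler_sum => n _; exact: lb n.
  rewrite sumrN big_split /= -!mulr_suml -/Ct in slb.
  have hk := Hc1 ym.
  have hc : Ct * eps * sy <= c1 / 2 * sy by rewrite ler_wpM2r.
  move: slb hk hc; rewrite -/sy.
  set S1 := \sum_n _; set KG := bil _ ym ym.
  rewrite /C' mulrA.
  set U := Ct * eps * sy; set V := Ct * (eps^-1 + 1) * e2.
  by move=> *; lra.
have hSQ : \sum_n sqv (Y n) <= 2 * N%:R * sy + 2 * e2.
  have -> : 2 * N%:R * sy = \sum_(n < N) (2 * sy).
    by rewrite sumr_const card_ord -[RHS]mulr_natr mulrAC.
  rewrite /e2 mulr_sumr -big_split /=; apply: ler_sum => n _.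
  by rewrite Yer; apply: sqv_split.
have hbe : (C' + c1 / (2 * N%:R)) * al <= be * lam.
  by move: Hbe; rewrite /Gm mulrAC ler_pdivrMr // [be * _]mulrC.
move: hT1 hT2 hSQ hbe.
set T1 := \sum_m _; set T2 := \sum_n bil (A n) _ _; set SQ := \sum_n sqv _.
move=> hT1 hT2 hSQ hbe.
have s1 : c4 * al * SQ <= c4 * al * (2 * N%:R * sy + 2 * e2).
  by rewrite ler_wpM2l // mulr_ge0 // ltW // divr_gt0 // mulr_gt0.
have s2 : c4 * al * (2 * N%:R * sy + 2 * e2) =
    al * (c1 / 2 * sy - C' * e2) + (C' + c1 / (2 * N%:R)) * al * e2.
  by rewrite /c4; field.
have s3 : (C' + c1 / (2 * N%:R)) * al * e2 <= be * T1.
  apply: le_trans (ler_wpM2r e20 hbe) _.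
  by rewrite -mulrA ler_wpM2l // ltW.
have s4 : al * (c1 / 2 * sy - C' * e2) <= al * T2 by rewrite ler_wpM2l // ltW.
apply: (le_trans s1); rewrite s2 addrC.
exact: lerD.
Qed.
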